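(* Let $t,b,k$ be positive integers with $3\le k\le t$ and $\ell=bk/(t(t-1))$ an integer, and let $d^*$ be a circular neighbor-balanced design in $\Omega_{(t,b,k)}$. Then under model $(\mathcal{M}1)$ the information matrix for the total effects $\phi=\tau+\lambda$ is $$C_{d^*}[\phi]=\frac{b(k-2)}{2(t-1)}\,Q_t,\qquad Q_t=I_t-t^{-1}J_t.$$
   Context: Designs: $t$ treatments, $b$ linear blocks; block $i$ has inner plots $j=1,\dots,k$ and border plots $j=0,k+1$; $d(i,j)$ is the treatment on plot $(i,j)$; circular means $d(i,0)=d(i,k)$, $d(i,k+1)=d(i,1)$. $\Omega_{(t,b,k)}$ is the set of circular designs with $t$ treatments and $b$ blocks of length $k$. $J_t$ is the $t\times t$ all-ones matrix. Model $(\mathcal{M}1)$: responses $Y_{i,j}$ ($1\le i\le b$, $1\le j\le k$) uncorrelated with common variance, $\mathbb{E}(Y_{i,j})=\beta_i+\tau_{d(i,j)}+\lambda_{d(i,j-1)}$, i.e. $\mathbb{E}(Y)=B\beta+T_d\tau+L_d\lambda$ with $B$ block incidence and $T_d,L_d$ ($bk\times t$) having a single $1$ in row $(i,j)$ at column $d(i,j)$, resp. $d(i,j-1)$. $\phi=K'\alpha$ with $\alpha=(\tau',\lambda')'$, $K=\mathbf 1_2\otimes I_t$. Information matrix: with $A=(T_d\mid L_d)$, $X^+$ the Moore–Penrose inverse, $\mathrm{pr}_{(X)}=X(X'X)^+X'$, $\mathrm{pr}^\perp_{(X)}=I-\mathrm{pr}_{(X)}$, $M=I-K(K'K)^+K'$,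 $X_1=AK(K'K)^+$, $X_2=(AM\mid B)$: $C_d[\phi]=X_1'\mathrm{pr}^\perp_{(X_2)}X_1$. CNBD: a design in $\Omega_{(t,b,k)}$ that is binary (each treatment at most once among the inner plots of each block), a balanced block design (equal replication and each unordered pair of distinct treatments together in the same number of blocks), and such that for each ordered pair $(a,c)$ of distinct treatments exactly $\ell$ inner plots $(i,j)$ have $d(i,j)=a$, $d(i,j+1)=c$. *)

(* Defs.v *)
From HB Require Import structures.
From mathcomp Require Import all_boot all_order all_algebra.
From Stdlib Require Import ClassicalEpsilon.
Set Implicit Arguments. Unset Strict Implicit. Unset Printing Implicit Defensive.
Import Order.TTheory GRing.Theory Num.Theory.
Local Open Scope ring_scope.

Definition penrose (R : realFieldType) m n (X : 'M[R]_(m, n)) (G : 'M[R]_(n, m)) :=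
  [/\ X *m G *m X = X, G *m X *m G = G,
      (X *m G)^T = X *m G & (G *m X)^T = G *m X].

(* X^+ : the matrix satisfying the four Penrose conditions (it exists and is
   unique over any ordered field). *)
Definition mpinv (R : realFieldType) m n (X : 'M[R]_(m, n)) : 'M[R]_(n, m) :=
  epsilon (inhabits 0) (penrose X).

Definition prX (R : realFieldType) m n (X : 'M[R]_(m, n)) : 'M[R]_m :=
  X *m mpinv (X^T *m X) *m X^T.

(* A circular design in Omega_(t,b,k): d i j is the treatment on inner plot
   (i, j+1) (blocks and inner plots numbered from 0).  Border plots are
   determined by circularity: the left neighbour of plot j is ord_pred j and
   the right neighbour is ordS j (cyclically in 'I_k). *)
Definition design (t b k : nat) := 'I_b -> 'I_k -> 'I_t.

Lemma card_plots b k : #|{: 'I_b * 'I_k}| = (b * k)%N.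
Proof. by rewrite card_prod !card_ord. Qed.

Definition plot_of b k (r : 'I_(b * k)) : 'I_b * 'I_k :=
  enum_val (cast_ord (esym (card_plots b k)) r).

Section Model.
Variables (R : realFieldType) (t b k : nat) (d : design t b k).

Definition Bmx : 'M[R]_(b * k, b) :=
  \matrix_(r, i) ((plot_of r).1 == i)%:R.
Definition Tmx : 'M[R]_(b * k, t) :=
  \matrix_(r, c) (d (plot_of r).1 (plot_of r).2 == c)%:R.
Definition Lmx : 'M[R]_(b * k, t) :=
  \matrix_(r, c) (d (plot_of r).1 (ord_pred (plot_of r).2) == c)%:R.
Definition Amx : 'M[R]_(b * k, t + t) := row_mx Tmx Lmx.
Definition Kmx : 'M[R]_(t + t, t) := col_mx 1%:M 1%:M.
Definition Mmx : 'M[R]_(t + t) := 1%:M - Kmx *m mpinv (Kmx^T *m Kmx) *m Kmx^T.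
Definition X1mx : 'M[R]_(b * k, t) := Amx *m Kmx *m mpinv (Kmx^T *m Kmx).
Definition X2mx : 'M[R]_(b * k, t + t + b) := row_mx (Amx *m Mmx) Bmx.

Definition info_total : 'M[R]_t := X1mx^T *m (1%:M - prX X2mx) *m X1mx.
End Model.

Definition CNBD (t b k : nat) (d : design t b k) (ell : nat) : Prop :=
  (forall i : 'I_b, injective (d i)) /\
  (exists r : nat, forall a : 'I_t,
      #|[set p : 'I_b * 'I_k | d p.1 p.2 == a]| = r) /\
  (exists lam : nat, forall a c : 'I_t, a != c ->
      #|[set i : 'I_b | (a \in codom (d i)) && (c \in codom (d i))]| = lam) /\
  (forall a c : 'I_t, a != c ->
      #|[set p : 'I_b * 'I_k | (d p.1 p.2 == a) && (d p.1 (ordS p.2) == c)]| = ell).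

(* Main.v *)
Require Import Defs.
From HB Require Import structures.
From mathcomp Require Import all_boot all_order all_algebra.
From mathcomp Require Import ring.
From Stdlib Require Import ClassicalEpsilon.
Set Implicit Arguments. Unset Strict Implicit. Unset Printing Implicit Defensive.
Import Order.TTheory GRing.Theory Num.Theory.
Local Open Scope ring_scope.



Section LA.
Variable R : realFieldType.

Lemma gram0 m n (E : 'M[R]_(m, n)) : E^T *m E = 0 -> E = 0.
Proof.
move=> h; apply/matrixP => i j; rewrite mxE.
have := congr1 (fun M : 'M[R]_n => M j j) h; rewrite !mxE => /eqP.
rewrite psumr_eq0 => [|l _]; last by rewrite mxE -expr2 sqr_ge0.
move/allP => /(_ i (mem_index_enum _)) /=; rewrite mxE -expr2 sqrf_eq0.
by move/eqP.
Qed.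

Lemma gram_unit m n (Y : 'M[R]_(m, n)) : row_free Y -> Y *m Y^T \in unitmx.
Proof.
move=> fY; rewrite unitmxE unitfE; apply/det0P => -[v nz0 hv].
have : (v *m Y)^T^T *m (v *m Y)^T = 0.
  by rewrite trmxK trmx_mul mulmxA -(mulmxA v) hv mul0mx.
by move/gram0/eqP; rewrite trmx_eq0 mulmx_free_eq0 // (negbTE nz0).
Qed.

Lemma penrose_fact m n r (F : 'M[R]_(m, r)) (Y : 'M[R]_(r, n)) :
  row_free Y -> row_free F^T -> exists G, penrose (F *m Y) G.
Proof.
move=> fY fF.
have uY := gram_unit fY; have uF := gram_unit fF.
rewrite trmxK in uF.
exists (Y^T *m invmx (Y *m Y^T) *m invmx (F^T *m F) *m F^T).
have e1 : F *m Y *m (Y^T *m invmx (Y *m Y^T) *m invmx (F^T *m F) *m F^T)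
   = F *m invmx (F^T *m F) *m F^T.
  by rewrite !mulmxA -(mulmxA F Y) -(mulmxA F) mulmxV // mulmx1.
have e2 : (Y^T *m invmx (Y *m Y^T) *m invmx (F^T *m F) *m F^T) *m (F *m Y)
   = Y^T *m invmx (Y *m Y^T) *m Y.
  by rewrite !mulmxA -(mulmxA _ F^T) -(mulmxA _ _ (F^T *m F)) mulVmx // mulmx1.
split.
- by rewrite e1 !mulmxA -(mulmxA _ F^T) -(mulmxA _ _ (F^T *m F)) mulVmx // mulmx1.
- by rewrite e2 !mulmxA -(mulmxA _ Y) -(mulmxA _ _ (Y *m Y^T)) mulVmx // mulmx1.
- by rewrite e1 !trmx_mul trmxK trmx_inv trmx_mul trmxK mulmxA.
- by rewrite e2 !trmx_mul trmxK trmx_inv trmx_mul trmxK mulmxA.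
Qed.

Lemma penrose_ex m n (X : 'M[R]_(m, n)) : exists G, penrose X G.
Proof.
set Y := row_base X; set F := X *m pinvmx Y.
have XFY : X = F *m Y by rewrite /F mulmxKpV // eq_row_base.
have fY : row_free Y := row_base_free X.
have fF : row_free F^T.
  rewrite /row_free mxrank_tr eqn_leq rank_leq_col /=.
  by have := mxrankM_maxl F Y; rewrite -XFY.
by have := penrose_fact fY fF; rewrite -XFY.
Qed.

Lemma mpinvP m n (X : 'M[R]_(m, n)) : penrose X (mpinv X).
Proof. exact: (epsilon_spec (inhabits 0) (penrose X) (penrose_ex X)). Qed.

Lemma prX_id m n (X : 'M[R]_(m, n)) : X *m mpinv (X^T *m X) *m (X^T *m X) = X.
Proof.
set S := X^T *m X; set G := mpinv S.
have [h1 _ _ _] := mpinvP S.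
have St : S^T = S by rewrite /S trmx_mul trmxK.
set E := X *m G *m S - X.
have EX : E^T *m X = 0.
  rewrite /E linearB /= mulmxBl.
  have -> : (X *m G *m S)^T *m X = (S *m G *m S)^T.
    rewrite [in RHS]trmx_mul St [(S *m G)^T]trmx_mul St.
    rewrite [(X *m G *m S)^T]trmx_mul St [(X *m G)^T]trmx_mul.
    by rewrite -!mulmxA.
  by rewrite h1 St subrr.
have : E^T *m E = 0.
  by rewrite {2}/E mulmxBr !mulmxA EX !mul0mx subrr.
by move/gram0/eqP; rewrite /E subr_eq0 => /eqP.
Qed.
End LA.



Section Sk.
Variables (R : realFieldType) (t b k : nat) (d : design t b k).

Lemma KK : (Kmx R t)^T *m Kmx R t = 2%:M.
Proof.
rewrite /Kmx tr_col_mx mul_row_col trmx1 mul1mx.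
by apply/matrixP => i j; rewrite !mxE; case: (i == j) => //=; rewrite ?addr0.
Qed.

Lemma GK : mpinv ((Kmx R t)^T *m Kmx R t) = 2^-1%:M.
Proof.
have [h _ _ _] := mpinvP ((Kmx R t)^T *m Kmx R t).
move: h; rewrite KK; set G := mpinv _ => h.
have two0 : (2 : R) != 0 by rewrite pnatr_eq0.
move: h; rewrite mul_scalar_mx mul_mx_scalar scalerA => /(congr1 (fun M => (2 * 2)^-1 *: M)).
rewrite scalerA mulVf ?mulf_neq0 // scale1r => ->.
apply/matrixP => i j; rewrite !mxE; case: (i == j) => /=; last by rewrite !mulr0.
by rewrite !mulr1n invfM -mulrA mulVf // mulr1.
Qed.

Lemma MK : (Mmx R t)^T *m Kmx R t = 0.
Proof.
rewrite /Mmx GK linearB /= trmx1 !trmx_mul trmxK tr_scalar_mx mulmxBl mul1mx.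
rewrite -!mulmxA KK -scalar_mxM mulVf ?pnatr_eq0 //.
by rewrite mulmx1 subrr.
Qed.


Lemma skeleton :
  let T := Tmx R d in let L := Lmx R d in let B := Bmx R b k in
  (k%:R : R) != 0 ->
  T^T *m T = L^T *m L -> T^T *m L = L^T *m T -> T^T *m B = L^T *m B ->
  B^T *m B = (k%:R : R)%:M ->
  info_total R d = 2^-1 *: (T^T *m T + T^T *m L)
                   - (k%:R : R)^-1 *: ((T^T *m B) *m (T^T *m B)^T).
Proof.
move=> T L B k0 F1 F2 F3 F4.
have two0 : (2 : R) != 0 by rewrite pnatr_eq0.
have X1E : X1mx R d = 2^-1 *: (T + L).
  by rewrite /X1mx GK /Amx /Kmx mul_row_col !mulmx1 mul_mx_scalar.
set W := (k%:R : R)^-1 *: (B *m (B^T *m T)).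
set U := X1mx R d - W.
have BTL : B^T *m L = B^T *m T.
  have : (T^T *m B)^T = (L^T *m B)^T by rewrite F3.
  by rewrite !trmx_mul !trmxK.
have TU : T^T *m U = 2^-1 *: (T^T *m T + T^T *m L)
                     - (k%:R : R)^-1 *: (T^T *m B *m (B^T *m T)).
  by rewrite /U X1E /W mulmxBr -scalemxAr -scalemxAr mulmxDr !mulmxA.
have LU : L^T *m U = T^T *m U.
  rewrite TU /U X1E /W mulmxBr -scalemxAr -scalemxAr mulmxDr !mulmxA.
  by rewrite -F1 -F2 -F3 [T^T *m L + _]addrC.
have BU : B^T *m U = 0.
  rewrite /U X1E /W mulmxBr -scalemxAr -scalemxAr mulmxDr !mulmxA F4 BTL mul_scalar_mx -scalemxAl.
  rewrite scalerA mulVf // scale1r -mulr2n -scaler_nat scalerA mulVf //.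
  by rewrite scale1r subrr.
have X2U : (X2mx R d)^T *m U = 0.
  rewrite /X2mx tr_row_mx mul_col_mx -/B BU trmx_mul -mulmxA /Amx tr_row_mx.
  rewrite mul_col_mx -/T -/L LU.
  have -> : col_mx (T^T *m U) (T^T *m U) = Kmx R t *m (T^T *m U).
    by rewrite /Kmx mul_col_mx !mul1mx.
  by rewrite mulmxA MK mul0mx col_mx0.
have WX : W = X2mx R d *m col_mx 0 ((k%:R : R)^-1 *: (B^T *m T)).
  by rewrite /X2mx mul_row_col mulmx0 add0r -scalemxAr.
have PW : prX (X2mx R d) *m W = W.
  rewrite WX /prX !mulmxA.
  by rewrite -(mulmxA (X2mx R d *m _) _ (X2mx R d)) prX_id.
have PU : prX (X2mx R d) *m U = 0.
  by rewrite /prX -mulmxA X2U mulmx0.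
have PX1 : (1%:M - prX (X2mx R d)) *m X1mx R d = U.
  have -> : X1mx R d = U + W by rewrite /U subrK.
  by rewrite mulmxBl mul1mx mulmxDr PU PW add0r addrK.
rewrite /info_total -mulmxA PX1 {1}X1E [(2^-1 *: _)^T]linearZ /= [(T + L)^T]linearD /=.
rewrite -scalemxAl mulmxDl LU.
rewrite -mulr2n -scaler_nat scalerA mulVf // scale1r TU.
by rewrite [(T^T *m B)^T]trmx_mul trmxK mulmxA.
Qed.

End Sk.



Section C.
Variables (R : realFieldType) (t b k : nat) (d : design t b k).

Lemma plot_bij : bijective (@plot_of b k).
Proof.
exists (fun p => cast_ord (card_plots b k) (enum_rank p)) => [r|p]; rewrite /plot_of.
  by rewrite enum_valK cast_ordKV.
by rewrite cast_ordK enum_rankK.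
Qed.

Lemma sum_plots (F : 'I_b * 'I_k -> R) : \sum_(r < b * k) F (plot_of r) = \sum_p F p.
Proof. by rewrite [RHS](reindex (@plot_of b k)) //; apply: onW_bij; apply: plot_bij. Qed.

Lemma sum_pred (F : 'I_b * 'I_k -> R) : \sum_p F (p.1, ord_pred p.2) = \sum_p F p.
Proof.
rewrite [RHS](eq_bigr (fun p => F (p.1, p.2))); last by case.
rewrite -(pair_bigA _ (fun i j => F (i, ord_pred j))) -(pair_bigA _ (fun i j => F (i, j))).
apply: eq_bigr => i _.
by rewrite [RHS](reindex_inj (@ord_pred_inj k)).
Qed.

Lemma sum_succ (F : 'I_b * 'I_k -> R) : \sum_p F (p.1, ordS p.2) = \sum_p F p.
Proof.
rewrite [RHS](eq_bigr (fun p => F (p.1, p.2))); last by case.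
rewrite -(pair_bigA _ (fun i j => F (i, ordS j))) -(pair_bigA _ (fun i j => F (i, j))).
apply: eq_bigr => i _.
by rewrite [RHS](reindex_inj (@ordS_inj k)).
Qed.

Lemma sum_card (T : finType) (P : pred T) : \sum_(x : T) (P x)%:R = #|[set x | P x]|%:R :> R.
Proof.
rewrite -sum1_card natr_sum [RHS]big_mkcond /=; apply: eq_bigr => x _.
by rewrite inE; case: (P x).
Qed.

Lemma trmulE m1 m2 (f : 'I_b * 'I_k -> 'I_m1 -> R) (g : 'I_b * 'I_k -> 'I_m2 -> R) :
  (\matrix_(r < b * k, a < m1) f (plot_of r) a)^T *m (\matrix_(r < b * k, c < m2) g (plot_of r) c)
  = \matrix_(a, c) \sum_p f p a * g p c.
Proof.
apply/matrixP => a c; rewrite !mxE.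
under eq_bigr do rewrite !mxE.
exact: (sum_plots (fun p => f p a * g p c)).
Qed.


Lemma ordS_neq (j : 'I_k) : (1 < k)%N -> ordS j != j.
Proof.
move=> k1; apply/eqP => /(congr1 val) /=.
case: (ltngtP j.+1 k) (ltn_ord j) => // [lt|eq] _.
  by rewrite modn_small // => /eqP; rewrite -[X in _ == X]addn0 -addn1 eqn_add2l.
by rewrite eq modnn => j0; move: eq; rewrite -j0 => k1'; move: k1; rewrite -k1'.
Qed.

Lemma sum_inj (f : 'I_k -> 'I_t) (a : 'I_t) : injective f ->
  \sum_j ((f j == a)%:R : R) = (a \in codom f)%:R.
Proof.
move=> inj; case: (boolP (a \in codom f)) => [/codomP [x ->]|na].
  rewrite (bigD1 x) //= eqxx big1 ?addr0 // => j ne.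
  by case: eqP => // /inj e; rewrite e eqxx in ne.
by rewrite big1 // => j _; case: eqP => // e; rewrite -e codom_f in na.
Qed.

Lemma TTE : (Tmx R d)^T *m Tmx R d =
  \matrix_(a, c) \sum_p ((d p.1 p.2 == a)%:R * (d p.1 p.2 == c)%:R).
Proof. exact: (trmulE (fun p a => (d p.1 p.2 == a)%:R) (fun p c => (d p.1 p.2 == c)%:R)). Qed.

Lemma LLE : (Lmx R d)^T *m Lmx R d =
  \matrix_(a, c) \sum_p ((d p.1 (ord_pred p.2) == a)%:R * (d p.1 (ord_pred p.2) == c)%:R).
Proof. exact: (trmulE (fun p a => (d p.1 (ord_pred p.2) == a)%:R) (fun p c => (d p.1 (ord_pred p.2) == c)%:R)). Qed.

Lemma TLE : (Tmx R d)^T *m Lmx R d =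
  \matrix_(a, c) \sum_p ((d p.1 p.2 == a)%:R * (d p.1 (ord_pred p.2) == c)%:R).
Proof. exact: (trmulE (fun p a => (d p.1 p.2 == a)%:R) (fun p c => (d p.1 (ord_pred p.2) == c)%:R)). Qed.

Lemma TBE : (Tmx R d)^T *m Bmx R b k =
  \matrix_(a, i) \sum_p ((d p.1 p.2 == a)%:R * (p.1 == i)%:R).
Proof. exact: (trmulE (fun p a => (d p.1 p.2 == a)%:R) (fun p i => (p.1 == i)%:R)). Qed.

Lemma LBE : (Lmx R d)^T *m Bmx R b k =
  \matrix_(a, i) \sum_p ((d p.1 (ord_pred p.2) == a)%:R * (p.1 == i)%:R).
Proof. exact: (trmulE (fun p a => (d p.1 (ord_pred p.2) == a)%:R) (fun p i => (p.1 == i)%:R)). Qed.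

Lemma BBE : (Bmx R b k)^T *m Bmx R b k = (k%:R : R)%:M.
Proof.
rewrite (trmulE (fun p i => (p.1 == i)%:R) (fun p i => (p.1 == i)%:R)).
apply/matrixP => i i'; rewrite !mxE.
rewrite -(pair_bigA _ (fun i0 j => ((i0 == i)%:R * (i0 == i')%:R : R))) /=.
rewrite (bigD1 i) //= [X in _ + X](@big1 _ _ _ _ _ _ (fun i0 => \sum_(j < k) ((i0 == i)%:R * (i0 == i')%:R : R))); last first.
  by move=> i0 ne; apply: big1 => j _; rewrite (negbTE ne) mul0r.
rewrite addr0 eqxx mul1r sumr_const card_ord eq_sym.
by case: (i' == i) => /=; rewrite ?mul0rn ?mulr1n ?mulr0n.
Qed.

Lemma F1 : (Tmx R d)^T *m Tmx R d = (Lmx R d)^T *m Lmx R d.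
Proof.
rewrite TTE LLE; apply/matrixP => a c; rewrite !mxE.
by rewrite (sum_pred (fun p => (d p.1 p.2 == a)%:R * (d p.1 p.2 == c)%:R)).
Qed.

Lemma F3 : (Tmx R d)^T *m Bmx R b k = (Lmx R d)^T *m Bmx R b k.
Proof.
rewrite TBE LBE; apply/matrixP => a c; rewrite !mxE.
by rewrite (sum_pred (fun p => (d p.1 p.2 == a)%:R * (p.1 == c)%:R)).
Qed.


Lemma NE (inj : forall i, injective (d i)) :
  (Tmx R d)^T *m Bmx R b k = \matrix_(a, i) ((a \in codom (d i))%:R).
Proof.
rewrite TBE; apply/matrixP => a i; rewrite !mxE.
rewrite -(pair_bigA _ (fun i0 j => ((d i0 j == a)%:R * (i0 == i)%:R : R))) /=.
rewrite (bigD1 i) //= [X in _ + X](@big1 _ _ _ _ _ _ (fun i0 => \sum_(j < k) ((d i0 j == a)%:R * (i0 == i)%:R : R))); last first.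
  by move=> i0 ne; apply: big1 => j _; rewrite (negbTE ne) mulr0.
rewrite addr0 -(sum_inj a (inj i)); apply: eq_bigr => j _.
by rewrite eqxx mulr1.
Qed.

Lemma TLform (ell : nat) (inj : forall i, injective (d i)) (k1 : (1 < k)%N)
  (Hell : forall a c : 'I_t, a != c ->
      #|[set p : 'I_b * 'I_k | (d p.1 p.2 == a) && (d p.1 (ordS p.2) == c)]| = ell) :
  (Tmx R d)^T *m Lmx R d = \matrix_(a, c) ((a != c)%:R * ell%:R).
Proof.
rewrite TLE; apply/matrixP => a c; rewrite !mxE.
rewrite -(sum_succ (fun p => (d p.1 p.2 == a)%:R * (d p.1 (ord_pred p.2) == c)%:R)) /=.
under eq_bigr do rewrite ordSK -natrM mulnb andbC.
rewrite (sum_card (fun p => (d p.1 p.2 == c) && (d p.1 (ordS p.2) == a))).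
case: (eqVneq a c) => [<-|ne]; last by rewrite Hell 1?eq_sym // mul1r.
rewrite mul0r; apply/eqP; rewrite pnatr_eq0 cards_eq0; apply/eqP/setP => p.
rewrite !inE; apply/negbTE; apply/negP => /andP [/eqP e1 /eqP e2].
have := ordS_neq p.2 k1; rewrite -e2 in e1.
by move/inj: e1 => e; rewrite -e eqxx.
Qed.

End C.



Theorem lemma4 (R : realFieldType) (t b k : nat) (d : design t b k) :
  (0 < b)%N -> (3 <= k)%N -> (k <= t)%N ->
  (t * (t - 1) %| b * k)%N ->
  CNBD d ((b * k) %/ (t * (t - 1))) ->
  info_total R d =
    ((b * (k - 2))%:R / (2 * (t - 1))%:R) *:
      (1%:M - (t%:R)^-1 *: const_mx 1 : 'M[R]_t).
Proof.
move=> b0 k3 kt dvd [inj [[r Hr] [[lam Hlam] Hell]]].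
set ell := (b * k %/ (t * (t - 1)))%N in Hell.
have k1 : (1 < k)%N by apply: leq_trans k3.
have t0 : (0 < t)%N by apply: leq_trans kt; apply: leq_trans k3.
have t1 : (1 < t)%N by apply: leq_trans kt.
have k0 : (k%:R : R) != 0 by rewrite pnatr_eq0 -lt0n ltnW.
have TLf := TLform R inj k1 Hell.
have F2 : (Tmx R d)^T *m Lmx R d = (Lmx R d)^T *m Tmx R d.
  rewrite -[(Lmx R d)^T *m _]trmxK trmx_mul trmxK TLf.
  by apply/matrixP => a c; rewrite !mxE eq_sym.
have TTf : (Tmx R d)^T *m Tmx R d = \matrix_(a, c) ((a == c)%:R * r%:R).
  rewrite TTE; apply/matrixP => a c; rewrite !mxE.
  under eq_bigr do rewrite -natrM mulnb.
  rewrite (@sum_card R _ (fun p => (d p.1 p.2 == a) && (d p.1 p.2 == c))).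
  case: (eqVneq a c) => [<-|ne].
    by rewrite mul1r -(Hr a); congr (_%:R); apply: eq_card => p; rewrite !inE andbb.
  rewrite mul0r; apply/eqP; rewrite pnatr_eq0 cards_eq0; apply/eqP/setP => p.
  rewrite !inE; apply/negbTE; apply/negP => /andP [/eqP e1 /eqP e2].
  by rewrite -e1 e2 eqxx in ne.
rewrite (@skeleton R t b k d k0 (F1 R d) F2 (F3 R d) (BBE R b k)).
rewrite TTf TLf (NE R inj).
have HrR : forall a, \sum_i ((a \in codom (d i))%:R : R) = r%:R.
  move=> a; rewrite -(Hr a) -sum_card.
  rewrite [RHS](eq_bigr (fun p => ((d p.1 p.2 == a)%:R : R))); last by case.
  rewrite -(pair_bigA _ (fun i j => ((d i j == a)%:R : R))) /=.
  by apply: eq_bigr => i _; rewrite sum_inj.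
have NN : forall a c, \sum_i ((a \in codom (d i))%:R * (c \in codom (d i))%:R : R)
                      = if a == c then r%:R else lam%:R.
  move=> a c; under eq_bigr do rewrite -natrM mulnb.
  case: (eqVneq a c) => [<-|ne].
    by under eq_bigr do rewrite andbb; rewrite HrR.
  by rewrite sum_card Hlam.
have rt : (r%:R * t%:R : R) = (b * k)%:R.
  have : \sum_(a < t) (r%:R : R) = (b * k)%:R.
    transitivity (\sum_(a < t) \sum_(p : 'I_b * 'I_k) ((d p.1 p.2 == a)%:R : R)).
      by apply: eq_bigr => a _; rewrite sum_card Hr.
    rewrite exchange_big /=.
    transitivity (\sum_(p : 'I_b * 'I_k) (1 : R)).
      apply: eq_bigr => p _; rewrite (bigD1 (d p.1 p.2)) //= eqxx.
      by rewrite big1 ?addr0 // => a ne; rewrite eq_sym (negbTE ne).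
    by rewrite sumr_const card_prod !card_ord.
  by move=> <-; rewrite sumr_const card_ord mulr_natr.
have ellR : (ell%:R * (t%:R * (t%:R - 1)) : R) = (b * k)%:R.
  by rewrite -(natrB _ (ltnW t1)) -natrM -natrM /ell divnK.
have lamrel : (r%:R + lam%:R * (t%:R - 1) : R) = r%:R * k%:R.
  pose a0 := Ordinal t0.
  have := NN a0; move=> NNa.
  have e1 : \sum_(c < t) \sum_i ((a0 \in codom (d i))%:R * (c \in codom (d i))%:R : R)
            = r%:R * k%:R.
    rewrite exchange_big /=.
    transitivity (\sum_i ((a0 \in codom (d i))%:R : R) * k%:R); last by rewrite -mulr_suml HrR.
    apply: eq_bigr => i _; rewrite -mulr_sumr; congr (_ * _).
    by rewrite sum_card cardsE card_codom // card_ord.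
  rewrite -e1 (bigD1 a0) //= NNa eqxx; congr (_ + _).
  rewrite (eq_bigr (fun _ => (lam%:R : R))); last by move=> c ne; rewrite NNa eq_sym (negbTE ne).
  rewrite sumr_const cardC1 card_ord -subn1 -[RHS]mulr_natr natrB //; exact: ltnW.
have tR0 : (t%:R : R) != 0 by rewrite pnatr_eq0 -lt0n.
have t1R : (t%:R - 1 : R) != 0.
  by rewrite -(natrB _ (ltnW t1)) pnatr_eq0 subn_eq0 -ltnNge.
have hr : (r%:R : R) = ell%:R * (t%:R - 1).
  by apply: (mulIf tR0); rewrite rt -ellR; ring.
have hlam : (lam%:R : R) = ell%:R * (k%:R - 1).
  apply: (mulIf t1R); move: lamrel; rewrite hr => h.
  rewrite -[lam%:R * _](addKr (ell%:R * (t%:R - 1))) h; ring.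
have hb : (b%:R : R) = ell%:R * t%:R * (t%:R - 1) / k%:R.
  apply: (mulIf k0); rewrite -[b%:R * k%:R]natrM -ellR mulfVK //; ring.
apply/matrixP => a c; rewrite !mxE.
under eq_bigr do rewrite !mxE.
rewrite NN.
case: (boolP (a == c)) => ac; rewrite ?ac ?(negbTE ac) /=.
  rewrite !natrM !natrB ?(ltnW t1) ?(ltnW k3) // hr hb.
  field; rewrite ?t1R ?tR0 ?k0 ?pnatr_eq0 //.
rewrite !natrM !natrB ?(ltnW t1) ?(ltnW k3) // hlam hb.
field; rewrite ?t1R ?tR0 ?k0 ?pnatr_eq0 //.
Qed.
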